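(* Let $(x_i,y_i)_{i=1}^9$ be any nine point pairs in $\mathbb P^2_x\times\mathbb P^2_y$ and $Z$ the $9\times 9$ matrix with rows $x_i^\top\otimes y_i^\top$. Then $Z$ is rank deficient if and only if there is a nonzero matrix $T\in\mathbb C^{3\times 3}$ (a possibly singular projective transformation $\mathbb P^2_x\dashrightarrow\mathbb P^2_y$) such that $y_i^\top(Tx_i)=0$ for all $i=1,\dots,9$, equivalently, $y_i$ lies on the line with normal vector $Tx_i$ for all $i$. Moreover, for such a $T$: (1) if $\operatorname{rank}T=1$, there exist a line $\ell\subset\mathbb P^2_x$ and a line $\ell'\subset\mathbb P^2_y$ such that for each $i$, $x_i\in\ell$ or $y_i\in\ell'$ (possibly both); (2) if $\operatorname{rank}T=2$, there are points $e\in\mathbb P^2_x$ and $e'\in\mathbb P^2_y$ (generating the right and left nullspaces of $T$) and a $\mathbb P^1$-homography sending the pencil of lines through $e$ to the pencil of lines through $e'$ such that the line $\ell_{ex_i}$ is sent to the line $\ell_{e'y_i}$ for each $i$; (3) if $\operatorname{rank}T=3$, then $T\in\mathrm{PGL}(3)$ and $y_i$ lies on the line with normal vector $Tx_i$ for each $i$.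
   Context: Work over $\mathbb C$. The line with normal vector $n\in\mathbb C^3\setminus\{0\}$ is $\{u\in\mathbb P^2:u^\top n=0\}$. For distinct points $a,b$, $\ell_{ab}$ denotes the line through $a$ and $b$. *)

(* Defs.v *)
(* Complex numbers are modelled as R[i] = complex R for a
   real field R : realType (e.g. the classical reals). *)
From HB Require Import structures.
From mathcomp Require Import all_boot all_order all_algebra.
From mathcomp Require Export complex mxtens reals.
Set Implicit Arguments.
Unset Strict Implicit.
Unset Printing Implicit Defensive.
Import Order.TTheory GRing.Theory Num.Theory.
Local Open Scope ring_scope.

(* Points of P^2 and normal vectors of lines are represented by column
   vectors in C^3 (nonzero, up to scaling). *)

Definition dotv (C : pzRingType) (u n : 'cV[C]_3) : C := (u^T *m n) 0 0.

Definition Zmat (C : pzRingType) (x y : 'I_9 -> 'cV[C]_3) : 'M[C]_(9, 3 * 3) :=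
  \matrix_(i < 9, j < 3 * 3) ((x i)^T *t (y i)^T) 0 j.

Definition on_line (C : pzRingType) (u n : 'cV[C]_3) : Prop := dotv u n = 0.

Definition distinct_pts (C : fieldType) (a b : 'cV[C]_3) : Prop :=
  \rank (row_mx a b) = 2%N.

Definition normal_of_line_through (C : pzRingType) (n a b : 'cV[C]_3) : Prop :=
  n != 0 /\ on_line a n /\ on_line b n.

(* H (acting on normal vectors) induces a P^1-homography from the pencil of
   lines through e to the pencil of lines through e': it maps the
   2-dimensional space of normals of lines through e injectively (hence
   bijectively) into the space of normals of lines through e'. *)
Definition pencil_homography (C : pzRingType) (e e' : 'cV[C]_3) (H : 'M[C]_3)
  : Prop :=
  (forall n : 'cV[C]_3, on_line e n -> on_line e' (H *m n)) /\
  (forall n : 'cV[C]_3, on_line e n -> H *m n = 0 -> n = 0).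

(* Main.v *)
Require Import Defs.
From HB Require Import structures.
From mathcomp Require Import all_boot all_order all_algebra.
From mathcomp Require Import complex mxtens reals.
From mathcomp Require Import ring.
Import GRing.Theory Num.Theory.
Set Implicit Arguments.
Unset Strict Implicit.
Local Open Scope ring_scope.
Local Open Scope complex_scope.

Section Vec3.
Variable C : fieldType.

Definition i0 : 'I_3 := @Ordinal 3 0 isT.
Definition i1 : 'I_3 := @Ordinal 3 1 isT.
Definition i2 : 'I_3 := @Ordinal 3 2 isT.

Lemma sum3 (F : 'I_3 -> C) : \sum_(i < 3) F i = F i0 + F i1 + F i2.
Proof.
rewrite !big_ord_recl big_ord0 addr0 addrA.
congr (F _ + F _ + F _); exact: val_inj.
Qed.

Lemma ord3_cases (i : 'I_3) : i = i0 \/ i = i1 \/ i = i2.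
Proof.
case: i => [[|[|[|m]]] Hm]; [left|right;left|right;right|by []]; exact: val_inj.
Qed.

Lemma vec3P (u v : 'cV[C]_3) :
  u i0 0 = v i0 0 -> u i1 0 = v i1 0 -> u i2 0 = v i2 0 -> u = v.
Proof.
move=> h0 h1 h2; apply/matrixP => i j; rewrite (ord1 j).
by case: (ord3_cases i) => [->|[->|->]].
Qed.

Lemma dot3 (u v : 'cV[C]_3) :
  dotv u v = u i0 0 * v i0 0 + u i1 0 * v i1 0 + u i2 0 * v i2 0.
Proof. by rewrite /dotv mxE sum3 !mxE. Qed.

Lemma mulmx3 (T : 'M[C]_3) (v : 'cV[C]_3) i :
  (T *m v) i 0 = T i i0 * v i0 0 + T i i1 * v i1 0 + T i i2 * v i2 0.
Proof. by rewrite mxE sum3. Qed.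

Lemma dotvC (u v : 'cV[C]_3) : dotv u v = dotv v u.
Proof. rewrite !dot3; ring. Qed.

Lemma dotvMl (u v : 'cV[C]_3) (T : 'M[C]_3) : dotv u (T *m v) = dotv (T^T *m u) v.
Proof.
by rewrite /dotv trmx_mul trmxK mulmxA.
Qed.

Definition cross (a b : 'cV[C]_3) : 'cV[C]_3 :=
  \col_i (if val i == 0%N then a i1 0 * b i2 0 - a i2 0 * b i1 0
          else if val i == 1%N then a i2 0 * b i0 0 - a i0 0 * b i2 0
          else a i0 0 * b i1 0 - a i1 0 * b i0 0).

Lemma cross0 a b : cross a b i0 0 = a i1 0 * b i2 0 - a i2 0 * b i1 0.
Proof. by rewrite mxE. Qed.
Lemma cross1 a b : cross a b i1 0 = a i2 0 * b i0 0 - a i0 0 * b i2 0.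
Proof. by rewrite mxE. Qed.
Lemma cross2 a b : cross a b i2 0 = a i0 0 * b i1 0 - a i1 0 * b i0 0.
Proof. by rewrite mxE. Qed.

Definition crossE := (cross0, cross1, cross2).

Lemma cross_triple a b c :
  cross a (cross b c) = dotv a c *: b - dotv a b *: c.
Proof.
by apply: vec3P; rewrite !crossE !mxE ?crossE !dot3; ring.
Qed.

Lemma cross_self a : cross a a = 0.
Proof. by apply: vec3P; rewrite !crossE !mxE; ring. Qed.

Lemma crossZr a b (c : C) : cross a (c *: b) = c *: cross a b.
Proof. by apply: vec3P; rewrite !crossE !mxE /=; ring. Qed.

Lemma gram (w n g e x h : 'cV[C]_3) :
  dotv w (cross n g) * dotv h (cross e x) =
  dotv w e * (dotv n x * dotv g h - dotv n h * dotv g x)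
  - dotv w x * (dotv n e * dotv g h - dotv n h * dotv g e)
  + dotv w h * (dotv n e * dotv g x - dotv n x * dotv g e).
Proof. rewrite !dot3 !crossE; ring. Qed.

Lemma exists_nz_entry (v : 'cV[C]_3) : v != 0 -> exists j, v j 0 != 0.
Proof.
move=> hv; apply/existsP; apply: contraNT hv => /existsPn H.
apply/eqP/matrixP => i k; rewrite (ord1 k) mxE; exact/eqP/negPn/(H i).
Qed.

Lemma exists_dot_nz (v : 'cV[C]_3) : v != 0 -> exists h, dotv h v != 0.
Proof.
move=> /exists_nz_entry [j hj]; exists (delta_mx j 0).
rewrite /dotv mxE (bigD1 j) //= big1 ?addr0.
  by rewrite !mxE !eqxx mul1r.
by move=> i hij; rewrite !mxE (negbTE hij) mul0r.
Qed.


Definition crossmx (f : 'cV[C]_3) : 'M[C]_3 :=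
  \matrix_(i, j) cross (delta_mx j 0) f i 0.

Lemma crossmxE (f n : 'cV[C]_3) : crossmx f *m n = cross n f.
Proof. by apply: vec3P; rewrite !mulmx3 !mxE /=; ring. Qed.

Lemma cross_indep (e x : 'cV[C]_3) : e != 0 -> \rank (row_mx e x) = 2%N ->
  cross e x != 0.
Proof.
move=> he hr; apply/eqP => hc.
have [h hh] := exists_dot_nz he.
have := cross_triple h e x; rewrite hc.
have -> : cross h (0 : 'cV[C]_3) = 0 by apply: vec3P; rewrite !crossE !mxE; ring.
move/eqP; rewrite eq_sym subr_eq0 => /eqP hx.
have hx' : x = (dotv h x / dotv h e) *: e.
  by rewrite mulrC -scalerA hx scalerA mulVf // scale1r.
move: hr; rewrite hx' -mul_mx_scalar -[e in row_mx e _]mulmx1 -mul_mx_row => hr.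
have := mxrankM_maxl e (row_mx 1%:M (dotv h x / dotv h e)%:M).
by rewrite hr => /leq_trans /(_ (rank_leq_col e)).
Qed.

End Vec3.
Section LA.
Variable C : fieldType.

Lemma rank1_sup m n (K : 'M[C]_(m, n)) (v : 'rV[C]_n) :
  (v <= K)%MS -> v != 0 -> \rank K = 1%N -> (K <= v)%MS.
Proof.
move=> hvK hv hK.
have rv : \rank v = 1%N.
  by apply/eqP; rewrite eqn_leq rank_leq_row lt0n mxrank_eq0.
by rewrite -(mxrank_leqif_sup hvK).2 rv hK.
Qed.

Lemma rowv_scal n (z v : 'rV[C]_n) : (z <= v)%MS -> exists c, z = c *: v.
Proof.
case/submxP => D ->; exists (D 0 0).
by rewrite [D]mx11_scalar mul_scalar_mx mxE eqxx mulr1n.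
Qed.

Lemma trZ m n (c : C) (A : 'M[C]_(m, n)) : (c *: A)^T = c *: A^T.
Proof. by apply/matrixP => i j; rewrite !mxE. Qed.

Lemma col_kernel (T : 'M[C]_3) : \rank T = 2%N ->
  exists e : 'cV[C]_3, [/\ e != 0, T *m e = 0 &
     forall z, T *m z = 0 -> exists c, z = c *: e].
Proof.
move=> hT.
have rK : \rank (kermx T^T) = 1%N by rewrite mxrank_ker mxrank_tr hT.
have : kermx T^T != 0 by rewrite -mxrank_eq0 rK.
case/rowV0Pn => v hvK hv.
have hv0 : v *m T^T = 0 by apply/sub_kermxP.
exists v^T; split.
- by rewrite trmx_eq0.
- by rewrite -[T]trmxK -trmx_mul hv0 trmx0.
- move=> z hz.
  have hzK : (z^T <= kermx T^T)%MS.
    by apply/sub_kermxP; rewrite -trmx_mul hz trmx0.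
  have [c hc] := rowv_scal (submx_trans hzK (rank1_sup hvK hv rK)).
  by exists c; rewrite -[z]trmxK hc trZ.
Qed.

Lemma row_kernel (T : 'M[C]_3) : \rank T = 2%N ->
  exists e : 'cV[C]_3, e != 0 /\ e^T *m T = 0.
Proof.
move=> hT.
have rK : \rank (kermx T) = 1%N by rewrite mxrank_ker hT.
have : kermx T != 0 by rewrite -mxrank_eq0 rK.
case/rowV0Pn => v hvK hv.
exists v^T; split; first by rewrite trmx_eq0.
by rewrite trmxK; apply/sub_kermxP.
Qed.

Lemma rank1_fact (T : 'M[C]_3) : \rank T = 1%N ->
  exists u v : 'cV[C]_3, [/\ u != 0, v != 0 & T = u *m v^T].
Proof.
move=> hT.
have : T != 0 by rewrite -mxrank_eq0 hT.
case/rowV0Pn => r hrT hr.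
case/submxP: (rank1_sup hrT hr hT) => D hD.
exists D, r^T; split.
- by apply/eqP => D0; move: hT; rewrite hD D0 mul0mx mxrank0.
- by rewrite trmx_eq0.
- by rewrite trmxK.
Qed.

End LA.
Section Z.
Variable C : fieldType.

Definition Tof (r : 'rV[C]_(3*3)) : 'M[C]_3 :=
  \matrix_(b, a) r 0 (mxtens_index (a, b)).
Definition rof (T : 'M[C]_3) : 'rV[C]_(3*3) :=
  \row_j T (mxtens_unindex j).2 (mxtens_unindex j).1.

Lemma Tof_rof T : Tof (rof T) = T.
Proof. by apply/matrixP => i j; rewrite !mxE mxtens_indexK. Qed.

Lemma rof_Tof r : rof (Tof r) = r.
Proof.
apply/matrixP => i j; rewrite (ord1 i) !mxE.
by rewrite -surjective_pairing mxtens_unindexK.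
Qed.

Lemma ZT (x y : 'I_9 -> 'cV[C]_3) r k :
  (Zmat x y *m r^T) k 0 = dotv (y k) (Tof r *m x k).
Proof.
rewrite /dotv !mxE.
rewrite (reindex (@mxtens_index 3 3)) /=; last first.
  by exists (@mxtens_unindex 3 3) => ? _; [apply: mxtens_indexK | apply: mxtens_unindexK].
under eq_bigr do rewrite !mxE mxtens_indexK.
under [RHS]eq_bigr do rewrite !mxE big_distrr.
rewrite exchange_big pair_big /=.
apply: eq_bigr => -[a b] _ /=; rewrite !mxE.
have E (u : 'cV[C]_3) c (i : 'I_1) : u c i = u c 0 by rewrite (ord1 i).
rewrite [x k a _]E [y k b _]E.
ring.
Qed.

End Z.

Theorem mainTheorem4 (R : realType) (x y : 'I_9 -> 'cV[R[i]]_3)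
  (hx : forall k, x k != 0) (hy : forall k, y k != 0) :
  ((\rank (Zmat x y) < 9)%N <->
     exists T : 'M[R[i]]_3, T != 0 /\ forall k, dotv (y k) (T *m x k) = 0)
  /\
  (forall T : 'M[R[i]]_3, T != 0 ->
     (forall k, dotv (y k) (T *m x k) = 0) ->
     (* (1) *)
     (\rank T = 1%N ->
        exists l l' : 'cV[R[i]]_3, l != 0 /\ l' != 0 /\
          forall k, on_line (x k) l \/ on_line (y k) l')
     /\
     (* (2) *)
     (\rank T = 2%N ->
        exists (e e' : 'cV[R[i]]_3) (H : 'M[R[i]]_3),
          [/\ e != 0 /\ e' != 0, T *m e = 0, e'^T *m T = 0,
              pencil_homography e e' H &
              forall k, distinct_pts e (x k) -> distinct_pts e' (y k) ->
                forall n, normal_of_line_through n e (x k) ->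
                  normal_of_line_through (H *m n) e' (y k)])
     /\
     (* (3) *)
     (\rank T = 3%N ->
        T \in unitmx /\ forall k, on_line (y k) (T *m x k))).
Proof.
split.
  split.
    move=> hZ.
    have rK : (0 < \rank (kermx (Zmat x y)^T))%N.
      by rewrite mxrank_ker mxrank_tr subn_gt0.
    have : kermx (Zmat x y)^T != 0 by rewrite -mxrank_eq0 -lt0n.
    case/rowV0Pn => r hrK hr.
    have h0 : r *m (Zmat x y)^T = 0 by apply/sub_kermxP.
    have hZr : Zmat x y *m r^T = 0 by rewrite -[Zmat x y]trmxK -trmx_mul h0 trmx0.
    exists (Tof r); split.
      apply: contra hr => /eqP h; rewrite -(rof_Tof r) h.
      by apply/eqP/matrixP => i j; rewrite !mxE.
    by move=> k; rewrite -ZT hZr mxE.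
  case=> T [hT0 hT].
  have hr : rof T != 0.
    apply: contra hT0 => /eqP h; rewrite -(Tof_rof T) h.
    by apply/eqP/matrixP => i j; rewrite !mxE.
  have hZr : Zmat x y *m (rof T)^T = 0.
    by apply/matrixP => k j; rewrite (ord1 j) ZT Tof_rof hT mxE.
  have hrK : (rof T <= kermx (Zmat x y)^T)%MS.
    by apply/sub_kermxP; rewrite -[rof T]trmxK -trmx_mul hZr trmx0.
  have h2 := mxrankS hrK; rewrite mxrank_ker mxrank_tr in h2.
  have h1 : (0 < \rank (rof T))%N by rewrite lt0n mxrank_eq0.
  by rewrite -subn_gt0; exact: leq_trans h1 h2.
move=> T hT0 hT; split; [|split].
- move=> r1; have [u [v [hu hv hTuv]]] := rank1_fact r1.
  exists v, u; split => //; split => // k.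
  have := hT k; rewrite hTuv /dotv.
  have -> : (y k)^T *m (u *m v^T *m x k) = ((y k)^T *m u) *m (v^T *m x k).
    by rewrite !mulmxA.
  rewrite mxE big_ord1 -[v^T *m x k]trmxK trmx_mul trmxK [in X in _ * X = _]mxE.
  by move/eqP; rewrite mulf_eq0 => /orP [] /eqP h; [right|left].
- move=> r2.
  have [e [he0 hTe hker]] := col_kernel r2.
  have [e' [he'0 he'T]] := row_kernel r2.
  have [f hf] := exists_dot_nz he0; rewrite dotvC in hf.
  pose H := T *m crossmx f.
  have HE n : H *m n = T *m cross n f by rewrite /H -mulmxA crossmxE.
  have P1 n : on_line e' (H *m n).
    by rewrite /on_line /dotv HE mulmxA he'T mul0mx mxE.
  have P2 n : on_line e n -> H *m n = 0 -> n = 0.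
    move=> hn; rewrite HE => /hker [c hc].
    have := cross_triple e n f.
    rewrite hc crossZr cross_self scaler0 hn scale0r subr0 => /esym/eqP.
    by rewrite scaler_eq0 (negbTE hf) /= => /eqP.
  exists e, e', H; split; [by split | exact: hTe | exact: he'T | | ].
    by split => [n _|]; [apply: P1 | exact: P2].
  move=> k hd _ n [hn0 [hne hnx]]; split; [|split] => //.
    by apply/negP => /eqP /(P2 _ hne) /eqP; rewrite (negbTE hn0).
  rewrite /on_line HE dotvMl.
  set w := T^T *m y k.
  have hwe : dotv w e = 0 by rewrite -dotvMl hTe /dotv mulmx0 mxE.
  have hwx : dotv w (x k) = 0 by rewrite -dotvMl hT.
  have [g hg] := exists_dot_nz (cross_indep he0 hd).
  have := gram w n f e (x k) g.
  rewrite hwe hwx (dotvC n e) hne (dotvC n (x k)) hnx.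
  rewrite !mul0r !subrr mulr0 addr0 => /eqP.
  by rewrite mulf_eq0 (negbTE hg) orbF => /eqP.
- move=> r3; split; last exact: hT.
  by rewrite -row_free_unit /row_free r3.
Qed.
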